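(* Let $p\ge1$ and $s_1,\dots,s_p\in\mathbb{C}^\times$ with $|s_i|\le1$ for all $i$. Then the Newton series $\sum_{n\ge0}(-1)^n\mathtt{s}^{\mathrm{sh}}_{y_{s_1}\cdots y_{s_p}}(n)\binom{z}{n}$ converges absolutely for $\mathrm{Re}(z)>-1$. If moreover $s_1\ne1$, it converges for $\mathrm{Re}(z)>-2$.
   Context: $\mathtt{s}^{\mathrm{sh}}_{y_{s_1}\cdots y_{s_p}}(m)=\sum_{m=m_1\ge\cdots\ge m_p\ge0}\frac{s_1^{m_1-m_2}\cdots s_{p-1}^{m_{p-1}-m_p}s_p^{m_p+1}}{(m_1+1)\cdots(m_p+1)}$ for $m\in\mathbb{Z}_{\ge0}$; $\binom{z}{n}=\frac{z(z-1)\cdots(z-n+1)}{n!}$. *)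

(* Defs.v *)
From Stdlib Require Import Reals List Arith Factorial.
From Coquelicot Require Import Coquelicot.
Import ListNotations.
Open Scope C_scope.

Fixpoint Cpow (x : C) (n : nat) : C :=
  match n with O => 1 | S k => x * Cpow x k end.

Fixpoint Csum (f : nat -> C) (m : nat) : C :=
  match m with O => f O | S k => Csum f k + f (S k) end.

(* s^sh_{y_{s_1}...y_{s_p}}(m) = sum_{m=m_1>=...>=m_p>=0}
     s_1^{m_1-m_2} ... s_{p-1}^{m_{p-1}-m_p} s_p^{m_p+1} / ((m_1+1)...(m_p+1)),
   computed by recursion on the word (first letter s_1, summing over m_2=k). *)
Fixpoint ssh (s : list C) (m : nat) : C :=
  match s with
  | [] => 1
  | a :: rest =>
      match rest with
      | [] => Cpow a (S m) / RtoC (INR (S m))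
      | _ :: _ => Csum (fun k => Cpow a (m - k) / RtoC (INR (S m)) * ssh rest k) m
      end
  end.

Fixpoint falling (z : C) (n : nat) : C :=
  match n with O => 1 | S k => falling z k * (z - RtoC (INR k)) end.

Definition binomC (z : C) (n : nat) : C := falling z n / RtoC (INR (fact n)).

Definition newton_term (s : list C) (z : C) (n : nat) : C :=
  Cpow (RtoC (-1)) n * ssh s n * binomC z n.

(* Main.v *)
Require Import Defs.
From Stdlib Require Import Reals List Lra Lia Arith Factorial.
From Coquelicot Require Import Coquelicot.
Import ListNotations.
Open Scope R_scope.

Fixpoint P (be : R) (n : nat) : R :=
  match n with O => 1 | S k => P be k * (1 - be / INR (S k)) end.

Lemma INRS_ge1 n : 1 <= INR (S n).
Proof. rewrite S_INR. pose proof (pos_INR n). lra. Qed.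

Lemma fac_pos be n : be < 1 -> 0 < 1 - be / INR (S n).
Proof.
  intros Hb. pose proof (INRS_ge1 n) as Hx.
  set (x := INR (S n)) in *.
  assert (be / x < 1).
  { apply (Rmult_lt_reg_r x); [lra|]. unfold Rdiv. rewrite Rmult_assoc, Rinv_l by lra. lra. }
  lra.
Qed.

Lemma P_pos be n : be < 1 -> 0 < P be n.
Proof.
  intros Hb. induction n; cbn [P]. lra.
  apply Rmult_lt_0_compat; auto. apply fac_pos; auto.
Qed.

Lemma P_mul b1 b2 n : b1 < 1 -> b2 < 1 ->
  P b1 n * P b2 n <= P (b1 + b2 - Rabs (b1 * b2)) n.
Proof.
  intros H1 H2. induction n; cbn [P]. lra.
  pose proof (fac_pos b1 n H1). pose proof (fac_pos b2 n H2).
  pose proof (P_pos b1 n H1). pose proof (P_pos b2 n H2).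
  replace (P b1 n * (1 - b1 / INR (S n)) * (P b2 n * (1 - b2 / INR (S n))))
    with ((P b1 n * P b2 n) * ((1 - b1 / INR (S n)) * (1 - b2 / INR (S n)))) by ring.
  apply Rmult_le_compat.
  - apply Rmult_le_pos; lra.
  - apply Rmult_le_pos; lra.
  - exact IHn.
  - pose proof (INRS_ge1 n) as Hx. unfold Rdiv.
    set (y := / INR (S n)).
    assert (0 < y <= 1).
    { unfold y. split. apply Rinv_0_lt_compat; lra.
      rewrite <- Rinv_1. apply Rinv_le_contravar; lra. }
    pose proof (Rle_abs (b1 * b2)). pose proof (Rabs_pos (b1*b2)).
    assert (b1 * b2 * (y * y) <= Rabs (b1 * b2) * y).
    { apply Rle_trans with (Rabs (b1*b2) * (y*y)).
      apply Rmult_le_compat_r; [apply Rmult_le_pos; lra | lra].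
      apply Rmult_le_compat_l; [lra|]. nra. }
    nra.
Qed.

Lemma P_ge1 e n : 0 <= e -> 1 <= P (- e) n.
Proof.
  intros He. induction n; cbn [P]. lra.
  pose proof (INRS_ge1 n).
  assert (0 <= e / INR (S n)) by (apply Rdiv_le_0_compat; lra).
  unfold Rdiv in *. nra.
Qed.

Lemma P_succ_le e n : 0 <= e -> P (- e) (S n) <= (1 + e) * P (- e) n.
Proof.
  intros He. cbn [P]. pose proof (P_ge1 e n He). pose proof (INRS_ge1 n).
  assert (e / INR (S n) <= e).
  { unfold Rdiv. apply Rle_trans with (e * 1). 2: lra. apply Rmult_le_compat_l; auto.
    rewrite <- Rinv_1. apply Rinv_le_contravar; lra. }
  unfold Rdiv in *. nra.
Qed.

Lemma sum_PQ e m : 0 < e ->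
  sum_f_R0 (fun k => P (- e) k / INR (S k)) m = (P (- e) (S m) - 1) / e.
Proof.
  intros He. induction m.
  - simpl. field. lra.
  - rewrite tech5, IHm. remember (S m) as k. cbn [P].
    pose proof (INRS_ge1 k). field. lra.
Qed.

Lemma sum_PQ_le e m : 0 < e ->
  sum_f_R0 (fun k => P (- e) k / INR (S k)) m <= (1 + e) / e * P (- e) m.
Proof.
  intros He. rewrite sum_PQ by auto. pose proof (P_succ_le e m). 
  pose proof (P_ge1 e m).
  apply Rle_trans with (P (- e) (S m) / e).
  unfold Rdiv. apply Rmult_le_compat_r. left; apply Rinv_0_lt_compat; lra. lra.
  unfold Rdiv. replace ((1 + e) * / e * P (- e) m) with (((1+e) * P (-e) m) * / e) by ring.
  apply Rmult_le_compat_r. left; apply Rinv_0_lt_compat; lra. apply H; lra.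
Qed.

Lemma ex_series_pos_bounded (a : nat -> R) M :
  (forall n, 0 <= a n) -> (forall N, sum_f_R0 a N <= M) -> ex_series a.
Proof.
  intros Hp Hb.
  assert (ex_finite_lim_seq (sum_n a)) as [l Hl].
  { apply ex_finite_lim_seq_incr with M.
    - intros n. rewrite !sum_n_Reals. rewrite tech5. pose proof (Hp (S n)). lra.
    - intros n. rewrite sum_n_Reals. apply Hb. }
  exists l. exact Hl.
Qed.

Lemma P_nonneg g n : g <= 1 -> 0 <= P g n.
Proof.
  intros Hg. induction n; cbn [P]. lra. apply Rmult_le_pos; auto.
  pose proof (INRS_ge1 n).
  assert (g / INR (S n) <= 1).
  { apply (Rmult_le_reg_r (INR (S n))); [lra|]. unfold Rdiv.
    rewrite Rmult_assoc, Rinv_l by lra. lra. }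
  lra.
Qed.

Lemma L2 g : 0 < g <= 1 -> ex_series (fun n => P g n / INR (S n)).
Proof.
  intros Hg. apply ex_series_pos_bounded with (1 / g).
  - intros n. pose proof (INRS_ge1 n).
    apply Rdiv_le_0_compat; [apply P_nonneg; lra| lra].
  - assert (forall N, sum_f_R0 (fun n => P g n / INR (S n)) N = (1 - P g (S N)) / g) as HH.
    { induction N. simpl. field. lra.
      rewrite tech5, IHN. remember (S N) as k. cbn [P].
      pose proof (INRS_ge1 k). field. lra. }
    intros N. rewrite HH. pose proof (P_nonneg g (S N)). unfold Rdiv.
    apply Rmult_le_compat_r. left; apply Rinv_0_lt_compat; lra. lra.
Qed.

Lemma L3 b : -1 < b < 1 ->
  ex_series (fun n => P b n / (INR (S n) * INR (S (S n)))).
Proof.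
  intros Hb. apply ex_series_pos_bounded with (1 / (1 + b)).
  - intros n. pose proof (INRS_ge1 n). pose proof (INRS_ge1 (S n)).
    apply Rdiv_le_0_compat; [left; apply P_pos; lra| nra].
  - assert (forall N, sum_f_R0 (fun n => P b n / (INR (S n) * INR (S (S n)))) N
                = (1 - P b (S N) / INR (S (S N))) / (1 + b)).
    { induction N. simpl. field. lra.
      rewrite tech5, IHN. remember (S N) as k. cbn [P].
      pose proof (INRS_ge1 k). rewrite (S_INR (S k)). field. lra. }
    intros N. rewrite H. pose proof (P_pos b (S N) (proj2 Hb)).
    pose proof (INRS_ge1 (S N)).
    assert (0 <= P b (S N) / INR (S (S N))) by (apply Rdiv_le_0_compat; lra).
    unfold Rdiv in *.
    apply Rmult_le_compat_r. left; apply Rinv_0_lt_compat; lra. lra.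
Qed.

Fixpoint Hs (n : nat) : R :=
  match n with O => 0 | S k => Hs k + / INR (S (S k)) end.

Lemma ln1p_le x : 0 < x -> ln (1 + x) <= x.
Proof.
  intros Hx. pose proof (exp_ineq1 x ltac:(lra)).
  rewrite <- (ln_exp x) at 2. left. apply ln_increasing; lra.
Qed.

Lemma Hs_ln n : ln (INR n + 2) - ln 2 <= Hs n.
Proof.
  induction n; cbn [Hs].
  - simpl. rewrite Rplus_0_l. lra.
  - pose proof (pos_INR n).
    assert (E : INR (S n) + 2 = (INR n + 2) * (1 + / (INR n + 2))).
    { rewrite S_INR. field. lra. }
    rewrite E, ln_mult by (try lra; assert (0 < / (INR n + 2)) by (apply Rinv_0_lt_compat; lra); lra).
    assert (INR (S (S n)) = INR n + 2) as E2 by (rewrite !S_INR; ring).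
    rewrite E2.
    pose proof (ln1p_le (/ (INR n + 2)) ltac:(apply Rinv_0_lt_compat; lra)).
    lra.
Qed.

Lemma Hs_nonneg n : 0 <= Hs n.
Proof.
  induction n; cbn [Hs]. lra. pose proof (INRS_ge1 (S n)).
  assert (0 < / INR (S (S n))) by (apply Rinv_0_lt_compat; lra). lra.
Qed.

Lemma L7 b : -1 < b < 1 -> is_lim_seq (fun n => P b n / INR (S n)) 0.
Proof.
  intros Hb. set (g := 1 + b).
  assert (Hv : forall n, 0 <= P b n / INR (S n)).
  { intros n. pose proof (INRS_ge1 n). apply Rdiv_le_0_compat; [apply P_nonneg; lra|lra]. }
  assert (Key : forall n, P b n / INR (S n) * (1 + g * Hs n) <= 1).
  { induction n.
    - simpl. lra.
    - assert (E : P b (S n) / INR (S (S n)) = P b n / INR (S n) * (1 - g / INR (S (S n)))).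
      { cbn [P]. unfold g. pose proof (INRS_ge1 n). rewrite (S_INR (S n)). field. lra. }
      rewrite E. cbn [Hs].
      pose proof (Hv n). pose proof (Hs_nonneg n). pose proof (INRS_ge1 (S n)).
      set (x := / INR (S (S n))). set (v := P b n / INR (S n)) in *.
      assert (0 < x <= 1 / 2).
      { unfold x. split. apply Rinv_0_lt_compat; lra.
        rewrite (S_INR (S n)) in *. rewrite S_INR. pose proof (pos_INR n).
        unfold Rdiv. rewrite Rmult_1_l. apply Rinv_le_contravar; lra. }
      unfold Rdiv. fold x.
      set (A := 1 + g * Hs n) in *.
      assert (1 <= A) by (unfold A, g in *; nra).
      assert (0 < g < 2) by (unfold g; lra).
      assert (0 < g * x) by nra.
      assert ((1 - g * x) * (A + g * x) <= A).
      { assert (0 <= (g * x) * (A - 1)) by (apply Rmult_le_pos; lra). nra. }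
      assert (0 <= 1 - g * x) by nra.
      replace (1 + g * (Hs n + x)) with (A + g * x) by (unfold A; ring).
      apply Rle_trans with (v * A); [|exact IHn].
      rewrite Rmult_assoc. apply Rmult_le_compat_l; lra. }
  apply is_lim_seq_spec. intros eps.
  pose proof (cond_pos eps) as He.
  set (M := ln 2 + 1 / (eps * g) + 1).
  destruct (INR_unbounded (exp M)) as [N HN].
  exists N. intros n Hn.
  rewrite Rminus_0_r, Rabs_pos_eq by apply Hv.
  assert (ln (INR n + 2) > M).
  { assert (INR N <= INR n) by (apply le_INR; auto).
    pose proof (exp_pos M).
    rewrite <- (ln_exp M). apply ln_increasing; lra. }
  pose proof (Hs_ln n). pose proof (Key n). pose proof (Hv n).
  assert (T : 1 / eps < 1 + g * Hs n).
  { assert (1 / (eps * g) < Hs n) by (unfold M in *; lra).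
    assert (g * (1 / (eps * g)) = 1 / eps) by (unfold g; field; split; lra).
    assert (0 < g) by (unfold g; lra). nra. }
  destruct (Rlt_or_le (P b n / INR (S n)) eps) as [Hl|Hl]; auto.
  exfalso.
  assert (eps * (1 / eps) = 1) by (field; lra).
  assert (0 < 1 / eps) by (apply Rdiv_lt_0_compat; lra).
  nra.
Qed.

Open Scope C_scope.

Lemma Cpow_mod (a : C) k : (Cmod a <= 1)%R -> (Cmod (Defs.Cpow a k) <= 1)%R.
Proof.
  intros Ha. induction k; simpl Defs.Cpow. rewrite Cmod_1; lra.
  rewrite Cmod_mult. pose proof (Cmod_ge_0 (Defs.Cpow a k)). pose proof (Cmod_ge_0 a). nra.
Qed.

Lemma Csum_mod (f : nat -> C) n : (Cmod (Csum f n) <= sum_f_R0 (fun k => Cmod (f k)) n)%R.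
Proof.
  induction n; simpl. lra.
  eapply Rle_trans. apply Cmod_triangle. lra.
Qed.

Lemma Csum_ext (f g : nat -> C) n : (forall k, (k <= n)%nat -> f k = g k) -> Csum f n = Csum g n.
Proof.
  induction n; intros H; simpl. apply H; lia.
  rewrite IHn by (intros; apply H; lia). rewrite H by lia. reflexivity.
Qed.

Lemma Csum_scal (c : C) (f : nat -> C) n : Csum (fun k => c * f k) n = c * Csum f n.
Proof. induction n; simpl. reflexivity. rewrite IHn. ring. Qed.

Fixpoint bb (w : C) (n : nat) : C :=
  match n with O => 1 | S k => bb w k * (1 - w * RtoC (/ INR (S k))) end.

Lemma INR_S_neq0 n : INR (S n) <> 0%R.
Proof. pose proof (INRS_ge1 n). lra. Qed.

Lemma RtoC_neq0 x : x <> 0%R -> RtoC x <> 0.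
Proof. intros H E. apply H. injection E. auto. Qed.

Lemma NB z n : Defs.Cpow (RtoC (-1)) n * binomC z n = bb (z + 1) n.
Proof.
  induction n.
  - unfold binomC. simpl. field; try (apply RtoC_neq0; lra).
  - cbn [bb]. rewrite <- IHn. unfold binomC. cbn [Defs.Cpow falling].
    change (fact (S n)) with (S n * fact n)%nat.
    rewrite mult_INR, RtoC_mult.
    pose proof (INR_S_neq0 n). pose proof (INR_fact_neq_0 n).
    rewrite RtoC_inv by auto. rewrite (S_INR n) in *. rewrite RtoC_plus.
    replace (RtoC (-1)%R) with (- (1)) by (unfold RtoC, Copp; simpl; f_equal; ring).
    field; repeat split; first [apply RtoC_neq0; auto | rewrite <- RtoC_plus; apply RtoC_neq0; auto].
Qed.

Lemma fac_bound (w : C) be : (be < Re w)%R -> (be < 1)%R ->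
  exists K : nat, forall n, (K <= n)%nat ->
    (Cmod (1 - w * RtoC (/ INR (S n))) <= 1 - be / INR (S n))%R.
Proof.
  intros H1 H2. destruct w as [wr wi]. simpl in H1.
  set (D := ((wr ^ 2 + wi ^ 2 + 1) / (2 * (wr - be)))%R).
  destruct (INR_unbounded D) as [K HK]. exists K. intros n Hn.
  assert (Hx : (INR K <= INR n)%R) by (apply le_INR; auto).
  pose proof (INRS_ge1 n). rewrite S_INR in *.
  set (x := (INR n + 1)%R) in *.
  set (y := (/ x)%R).
  assert (Hy : (0 < y <= 1)%R).
  { unfold y. split. apply Rinv_0_lt_compat; lra.
    rewrite <- Rinv_1. apply Rinv_le_contravar; lra. }
  assert (HD : (0 < D)%R).
  { unfold D. apply Rdiv_lt_0_compat; nra. }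
  assert (Hyb : (y * (wr ^ 2 + wi ^ 2 + 1) <= 2 * (wr - be))%R).
  { unfold y. apply (Rmult_le_reg_l x). lra.
    replace (x * (/ x * (wr ^ 2 + wi ^ 2 + 1)))%R with (wr ^ 2 + wi ^ 2 + 1)%R by (field; lra).
    assert (wr ^ 2 + wi ^ 2 + 1 = D * (2 * (wr - be)))%R by (unfold D; field; lra).
    rewrite H0. apply Rmult_le_compat_r; unfold x; lra. }
  assert (E : Cmod (1 - (wr, wi) * RtoC y) = sqrt ((1 - wr * y) ^ 2 + (wi * y) ^ 2)).
  { unfold Cmod. simpl. f_equal. ring. }
  unfold Rdiv. fold y. rewrite E.
  assert (Hp : (0 <= 1 - be * y)%R).
  { destruct (Rle_lt_dec be 0). nra. nra. }
  rewrite <- (sqrt_pow2 (1 - be * y)) by exact Hp.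
  apply sqrt_le_1_alt.
  assert (0 <= be ^ 2 * y ^ 2)%R by nra.
  assert (y * (y * (wr ^ 2 + wi ^ 2 + 1)) <= y * (2 * (wr - be)))%R by (apply Rmult_le_compat_l; lra).
  nra.
Qed.

Lemma term_le_sum (f : nat -> R) i K : (forall j, (0 <= f j)%R) -> (i <= K)%nat -> (f i <= sum_f_R0 f K)%R.
Proof.
  intros Hf Hi. induction K.
  - replace i with 0%nat by lia. simpl. lra.
  - rewrite tech5. destruct (Nat.eq_dec i (S K)).
    + subst. pose proof (cond_pos_sum f K). 
      assert (0 <= sum_f_R0 f K)%R. { apply cond_pos_sum. auto. } lra.
    + pose proof (Hf (S K)). assert (f i <= sum_f_R0 f K)%R by (apply IHK; lia). lra.
Qed.

Lemma bb_bound (w : C) be : (be < Re w)%R -> (be < 1)%R ->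
  exists Cc, (0 <= Cc)%R /\ forall n, (Cmod (bb w n) <= Cc * P be n)%R.
Proof.
  intros H1 H2. destruct (fac_bound w be H1 H2) as [K HK].
  set (f := fun i => (Cmod (bb w i) / P be i)%R).
  assert (Hf : forall i, (0 <= f i)%R).
  { intros i. unfold f. apply Rdiv_le_0_compat. apply Cmod_ge_0. apply P_pos; auto. }
  exists (sum_f_R0 f K). split. apply cond_pos_sum; auto.
  assert (Hlow : forall i, (i <= K)%nat -> (Cmod (bb w i) <= sum_f_R0 f K * P be i)%R).
  { intros i Hi. pose proof (term_le_sum f i K Hf Hi) as H. unfold f in H at 1.
    pose proof (P_pos be i H2).
    replace (Cmod (bb w i)) with (Cmod (bb w i) / P be i * P be i)%R by (field; lra).
    apply Rmult_le_compat_r; lra. }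
  assert (Hhi : forall d, (Cmod (bb w (K + d)) * P be K <= Cmod (bb w K) * P be (K + d))%R).
  { induction d.
    - rewrite Nat.add_0_r. lra.
    - rewrite Nat.add_succ_r. cbn [bb P].
      rewrite Cmod_mult.
      pose proof (HK (K + d)%nat ltac:(lia)).
      pose proof (fac_pos be (K + d) H2).
      pose proof (P_pos be K H2). pose proof (Cmod_ge_0 (bb w (K + d))).
      pose proof (Cmod_ge_0 (1 - w * RtoC (/ INR (S (K + d))))).
      apply Rle_trans with (Cmod (bb w (K + d)) * P be K * (1 - be / INR (S (K + d))))%R.
      + replace (Cmod (bb w (K + d)) * Cmod (1 - w * RtoC (/ INR (S (K + d)))) * P be K)%R
          with (Cmod (bb w (K + d)) * P be K * Cmod (1 - w * RtoC (/ INR (S (K + d)))))%R by ring.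
        apply Rmult_le_compat_l; [nra|lra].
      + rewrite <- Rmult_assoc. apply Rmult_le_compat_r; lra. }
  intros n. destruct (le_lt_dec n K) as [Hn|Hn]. auto.
  replace n with (K + (n - K))%nat by lia.
  pose proof (Hhi (n - K)%nat). pose proof (Hlow K (le_n K)).
  pose proof (P_pos be K H2). pose proof (P_pos be (K + (n - K)) H2).
  set (B := Cmod (bb w (K + (n - K)))) in *. set (PK := P be K) in *.
  set (Pn := P be (K + (n - K))) in *. set (S0 := sum_f_R0 f K) in *.
  assert (Cmod (bb w K) <= S0 * PK)%R by auto.
  apply (Rmult_le_reg_r PK). lra.
  apply Rle_trans with (Cmod (bb w K) * Pn)%R. lra.
  replace (S0 * Pn * PK)%R with (S0 * PK * Pn)%R by ring.
  apply Rmult_le_compat_r; lra.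
Qed.

Definition Sx (s : list C) n := RtoC (INR (S n)) * ssh s n.

Lemma ssh_of_Sx s n : ssh s n = Sx s n * RtoC (/ INR (S n)).
Proof.
  unfold Sx. pose proof (INR_S_neq0 n). rewrite RtoC_inv by auto.
  field. apply RtoC_neq0; auto.
Qed.

Lemma Cmod_Sx s n : Cmod (Sx s n) = (INR (S n) * Cmod (ssh s n))%R.
Proof.
  unfold Sx. rewrite Cmod_mult, Cmod_R, Rabs_pos_eq. reflexivity.
  pose proof (INRS_ge1 n); lra.
Qed.

Lemma ssh_cons2 a b r n : ssh (a :: b :: r) n =
  Csum (fun k => Defs.Cpow a (n - k) / RtoC (INR (S n)) * ssh (b :: r) k) n.
Proof. reflexivity. Qed.

Lemma ssh_cons1 a n : ssh [a] n = Defs.Cpow a (S n) / RtoC (INR (S n)).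
Proof. reflexivity. Qed.

Lemma Sx_cons1 a n : Sx [a] n = Defs.Cpow a (S n).
Proof.
  unfold Sx. rewrite ssh_cons1. pose proof (INR_S_neq0 n). field. apply RtoC_neq0; auto.
Qed.

Lemma Sx_cons2 a b r n : Sx (a :: b :: r) n =
  Csum (fun k => Defs.Cpow a (n - k) * ssh (b :: r) k) n.
Proof.
  unfold Sx. rewrite ssh_cons2.
  rewrite (Csum_ext _ (fun k => / RtoC (INR (S n)) * (Defs.Cpow a (n - k) * ssh (b :: r) k)))
    by (intros; unfold Cdiv; ring).
  rewrite Csum_scal. pose proof (INR_S_neq0 n). field. apply RtoC_neq0; auto.
Qed.

Lemma G_bound (a : C) (g : nat -> C) C0 e n : (Cmod a <= 1)%R -> (0 < e)%R -> (0 <= C0)%R ->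
  (forall k, (Cmod (g k) <= C0 * P (- e) k / INR (S k))%R) ->
  (Cmod (Csum (fun k => (Defs.Cpow a (n - k)%nat * g k)%C) n) <= C0 * ((1 + e) / e) * P (- e) n)%R.
Proof.
  intros Ha He HC Hg.
  eapply Rle_trans. apply Csum_mod.
  eapply Rle_trans.
  apply sum_Rle with (Bn := fun k => (P (- e) k / INR (S k) * C0)%R).
  { intros k _. rewrite Cmod_mult. pose proof (Cpow_mod a (n - k) Ha). 
    pose proof (Hg k). pose proof (Cmod_ge_0 (g k)). pose proof (Cmod_ge_0 (Defs.Cpow a (n - k))).
    apply Rle_trans with (1 * Cmod (g k))%R. apply Rmult_le_compat_r; lra.
    unfold Rdiv in *. lra. }
  rewrite <- scal_sum. rewrite Rmult_assoc. apply Rmult_le_compat_l; auto.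
  apply sum_PQ_le; auto.
Qed.

Lemma Sx_rec s e : s <> [] -> (forall x, In x s -> (Cmod x <= 1)%R) -> (0 < e)%R ->
  exists (g : nat -> C) (Cc : R), (0 <= Cc)%R /\
    (forall n, Sx s (S n) = nth 0 s 0 * Sx s n + g (S n)) /\
    (forall n, (Cmod (g n) <= Cc * P (- e) n / INR (S n))%R) /\
    (forall n, (Cmod (Sx s n) <= Cc * P (- e) n)%R).
Proof.
  intros Hne Hs He. induction s as [|a rest IH]. congruence.
  destruct rest as [|b r].
  - exists (fun _ => 0), 1%R. split. lra. split; [|split].
    + intros n. rewrite !Sx_cons1. simpl nth. cbn [Defs.Cpow]. ring.
    + intros n. rewrite Cmod_0. pose proof (P_ge1 e n). pose proof (INRS_ge1 n).
      apply Rdiv_le_0_compat; lra.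
    + intros n. rewrite Sx_cons1. pose proof (P_ge1 e n).
      pose proof (Cpow_mod a (S n) (Hs a (or_introl eq_refl))). lra.
  - destruct IH as [g0 [C0 [HC0 [_ [_ HS0]]]]].
    + congruence.
    + intros x Hx. apply Hs. right; auto.
    + assert (Hg : forall k, (Cmod (ssh (b :: r) k) <= C0 * P (- e) k / INR (S k))%R).
      { intros k. pose proof (HS0 k). rewrite Cmod_Sx in H. pose proof (INRS_ge1 k).
        unfold Rdiv. apply (Rmult_le_reg_l (INR (S k))). lra.
        replace (INR (S k) * (C0 * P (- e) k * / INR (S k)))%R with (C0 * P (- e) k)%R
          by (field; lra). lra. }
      set (C1 := (C0 * ((1 + e) / e))%R).
      assert (HC1 : (C0 <= C1)%R).
      { unfold C1. assert (1 <= (1 + e) / e)%R.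
        { apply (Rmult_le_reg_r e); auto. unfold Rdiv. rewrite Rmult_assoc, Rinv_l by lra. lra. }
        nra. }
      exists (ssh (b :: r)), C1. split. lra. split; [|split].
      * intros n. rewrite !Sx_cons2. cbn [Csum]. simpl nth.
        rewrite Nat.sub_diag. cbn [Defs.Cpow]. rewrite Cmult_1_l. f_equal.
        rewrite (Csum_ext _ (fun k => a * (Defs.Cpow a (n - k) * ssh (b :: r) k))).
        apply Csum_scal.
        intros k Hk. rewrite Nat.sub_succ_l by auto. cbn [Defs.Cpow]. ring.
      * intros n. pose proof (Hg n). pose proof (P_ge1 e n). pose proof (INRS_ge1 n).
        apply Rle_trans with (C0 * P (- e) n / INR (S n))%R. auto.
        unfold Rdiv. apply Rmult_le_compat_r. left; apply Rinv_0_lt_compat; lra.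
        apply Rmult_le_compat_r; lra.
      * intros n. rewrite Sx_cons2. unfold C1. apply G_bound; auto.
        apply Hs. left; auto.
Qed.


Lemma tele (u : nat -> C) (r : nat -> R) :
  (forall n, (Cmod (u n) <= r n)%R) -> is_lim_seq r 0%R ->
  ex_series (fun n => u (S n) - u n).
Proof.
  intros Hb Hl. exists (- u O).
  assert (Hs : forall N, sum_n (fun n => u (S n) - u n) N = u (S N) - u O).
  { induction N. rewrite sum_O. reflexivity.
    rewrite sum_Sn, IHN. unfold plus. simpl. ring. }
  unfold is_series. apply filterlim_ext with (fun N => u (S N) - u O).
  { intros N. rewrite Hs. reflexivity. }
  apply (proj2 (filterlim_locally_ball_norm (K := C_AbsRing) (U := C_NormedModule) _ _)).
  intros eps. apply is_lim_seq_spec in Hl. destruct (Hl eps) as [N HN].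
  exists N. intros n Hn. unfold ball_norm.
  change (Cmod (minus (u (S n) - u O)%C (- u O)%C) < eps)%R.
  replace (minus (u (S n) - u 0%nat) (- u 0%nat)) with (u (S n)).
  2: { unfold minus, plus, opp. simpl. ring. }
  pose proof (HN (S n) ltac:(lia)). pose proof (Hb (S n)).
  rewrite Rminus_0_r in H. pose proof (Rle_abs (r (S n))). lra.
Qed.

Lemma exR_scal (K : R) (a : nat -> R) : ex_series a -> ex_series (fun n => (K * a n)%R).
Proof. intros H. apply (ex_series_scal_l K a) in H. exact H. Qed.

Lemma exC_le (a : nat -> C) (r : nat -> R) :
  (forall n, (Cmod (a n) <= r n)%R) -> ex_series r -> ex_series a.
Proof. intros. apply (@ex_series_le _ C_CompleteNormedModule a r); auto. Qed.

Lemma exC_add (a b : nat -> C) : ex_series a -> ex_series b -> ex_series (fun n => a n + b n).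
Proof. intros. apply (ex_series_plus a b); auto. Qed.

Lemma exC_sub (a b : nat -> C) : ex_series a -> ex_series b -> ex_series (fun n => a n - b n).
Proof. intros. apply (ex_series_minus a b); auto. Qed.

Lemma exC_scal (k : C) (a : nat -> C) : ex_series a -> ex_series (fun n => k * a n).
Proof. intros. apply (ex_series_scal k a); auto. Qed.

Lemma Cmod_Rinv x : (0 < x)%R -> Cmod (RtoC (/ x)) = (/ x)%R.
Proof.
  intros. rewrite Cmod_R, Rabs_pos_eq. auto. left; apply Rinv_0_lt_compat; auto.
Qed.

Lemma part2 (s w : C) (Sq g b : nat -> C) (C1 C2 e be : R) :
  s <> 1 -> (0 < e)%R -> (be < 1)%R -> (-1 < be - e - Rabs (be * - e))%R ->
  (0 <= C1)%R -> (0 <= C2)%R ->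
  (forall n, Sq (S n) = s * Sq n + g (S n)) ->
  (forall n, (Cmod (g n) <= C1 * P (- e) n / INR (S n))%R) ->
  (forall n, (Cmod (Sq n) <= C1 * P (- e) n)%R) ->
  (forall n, b (S n) = b n * (1 - w * RtoC (/ INR (S n)))) ->
  (forall n, (Cmod (b n) <= C2 * P be n)%R) ->
  ex_series (fun n => b n * Sq n * RtoC (/ INR (S n))).
Proof.
  intros Hs He Hbe Hga HC1 HC2 Hrec Hg HSq Hb Hbb.
  set (ga := (be - e - Rabs (be * - e))%R) in *.
  assert (Hga1 : (ga < 1)%R).
  { unfold ga. pose proof (Rabs_pos (be * - e)). lra. }
  assert (Pm : forall n, (P be n * P (- e) n <= P ga n)%R).
  { intros n. apply P_mul; lra. }
  set (c := fun n => b n * RtoC (/ INR (S n))).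
  set (u := fun n => c n * Sq n).
  assert (Hs1 : s - 1 <> 0).
  { intros E. apply Hs. replace s with (s - 1 + 1) by ring. rewrite E. ring. }
  assert (Hid : forall n, /(s - 1) * ((u (S n) - u n) - ((c (S n) - c n) * Sq (S n) + c n * g (S n)))
                 = b n * Sq n * RtoC (/ INR (S n))).
  { intros n. unfold u, c. rewrite Hrec. field. auto. }
  apply ex_series_ext with (1 := Hid).
  apply exC_scal. apply exC_sub.
  -
    apply tele with (r := fun n => (C2 * C1 * (P ga n / INR (S n)))%R).
    + intros n. unfold u, c. rewrite !Cmod_mult. rewrite Cmod_Rinv by (pose proof (INRS_ge1 n); lra).
      pose proof (Hbb n). pose proof (HSq n). pose proof (Pm n).
      pose proof (P_pos be n Hbe). pose proof (P_ge1 e n ltac:(lra)).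
      pose proof (Cmod_ge_0 (b n)). pose proof (Cmod_ge_0 (Sq n)).
      pose proof (INRS_ge1 n). 
      assert (0 < / INR (S n))%R by (apply Rinv_0_lt_compat; lra).
      unfold Rdiv.
      apply Rle_trans with (C2 * P be n * / INR (S n) * (C1 * P (- e) n))%R.
      * apply Rmult_le_compat; try apply Rmult_le_pos; try lra.
        apply Rmult_le_compat_r; lra.
      * replace (C2 * P be n * / INR (S n) * (C1 * P (- e) n))%R
          with (C2 * C1 * (P be n * P (- e) n) * / INR (S n))%R by ring.
        replace (C2 * C1 * (P ga n * / INR (S n)))%R with (C2 * C1 * P ga n * / INR (S n))%R by ring.
        apply Rmult_le_compat_r; [lra|]. apply Rmult_le_compat_l; [nra|lra].
    + replace (Finite 0%R) with (Rbar_mult (C2 * C1)%R 0%R) by (simpl; f_equal; ring).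
      apply is_lim_seq_scal_l. apply L7. lra.
  - apply exC_le with (r := fun n => (C2 * C1 * (1 + e) * (Cmod (w + 1) + 1) *
                                  (P ga n / (INR (S n) * INR (S (S n)))))%R).
    2: { apply exR_scal. apply L3. lra. }
    intros n.
    assert (Ec : c (S n) - c n = - (b n * (w + 1)) * RtoC (/ (INR (S n) * INR (S (S n))))).
    { unfold c. rewrite Hb. pose proof (INR_S_neq0 n). pose proof (INR_S_neq0 (S n)).
      rewrite !RtoC_inv by (auto; apply Rmult_integral_contrapositive_currified; auto).
      rewrite RtoC_mult. rewrite (S_INR (S n)), RtoC_plus. rewrite (S_INR (S n)) in H0.
      field. repeat split; first [apply RtoC_neq0; auto | rewrite <- RtoC_plus; apply RtoC_neq0; auto]. }
    eapply Rle_trans. apply Cmod_triangle.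
    rewrite Ec. unfold c. rewrite !Cmod_mult, Cmod_opp, Cmod_mult.
    pose proof (INRS_ge1 n) as Hx1. pose proof (INRS_ge1 (S n)) as Hx2.
    rewrite !Cmod_Rinv by nra.
    pose proof (Hbb n). pose proof (HSq (S n)). pose proof (Hg (S n)). pose proof (Pm n).
    pose proof (P_pos be n Hbe). pose proof (P_ge1 e n ltac:(lra)).
    pose proof (P_succ_le e n ltac:(lra)).
    pose proof (Cmod_ge_0 (b n)). pose proof (Cmod_ge_0 (Sq (S n))). pose proof (Cmod_ge_0 (g (S n))).
    pose proof (Cmod_ge_0 (w + 1)).
    set (x1 := INR (S n)) in *. set (x2 := INR (S (S n))) in *.
    assert (Hi : (0 < / (x1 * x2))%R) by (apply Rinv_0_lt_compat; nra).
    assert (Hi1 : (0 < / x1)%R) by (apply Rinv_0_lt_compat; nra).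
    rewrite Rinv_mult in *.
    set (B := Cmod (b n)) in *. set (W := Cmod (w + 1)) in *.
    set (Q := Cmod (Sq (S n))) in *. set (G := Cmod (g (S n))) in *.
    set (Pb := P be n) in *. set (Pe := P (- e) n) in *. set (Pe1 := P (- e) (S n)) in *.
    set (i1 := (/ x1)%R) in *. set (i2 := (/ x2)%R) in *.
    assert (0 < i2)%R by (unfold i2; apply Rinv_0_lt_compat; lra).
    unfold Rdiv in *. fold i2 in H1.
    assert (Q <= C1 * (1 + e) * Pe)%R by nra.
    assert (G <= C1 * (1 + e) * Pe * i2)%R.
    { apply Rle_trans with (C1 * Pe1 * i2)%R. lra.
      apply Rmult_le_compat_r; [lra|]. nra. }
    assert (B <= C2 * Pb)%R by auto.
    assert (B * W * (i1 * i2) * Q <= C2 * C1 * (1 + e) * W * (Pb * Pe) * (i1 * i2))%R.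
    { assert (B * Q <= (C2 * Pb) * (C1 * (1 + e) * Pe))%R.
      { apply Rmult_le_compat; try lra. }
      assert (0 <= W * (i1 * i2))%R by (apply Rmult_le_pos; [lra| nra]).
      nra. }
    assert (B * i1 * G <= C2 * C1 * (1 + e) * (Pb * Pe) * (i1 * i2))%R.
    { assert (B * G <= (C2 * Pb) * (C1 * (1 + e) * Pe * i2))%R.
      { apply Rmult_le_compat; try lra. }
      nra. }
    assert (0 <= C2 * C1 * (1 + e))%R by (apply Rmult_le_pos; nra).
    assert (0 <= i1 * i2)%R by nra.
    assert (C2 * C1 * (1 + e) * (Pb * Pe) * (i1 * i2) <= C2 * C1 * (1 + e) * P ga n * (i1 * i2))%R.
    { apply Rmult_le_compat_r; auto. apply Rmult_le_compat_l; auto. }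
    assert (C2 * C1 * (1 + e) * W * (Pb * Pe) * (i1 * i2) <= C2 * C1 * (1 + e) * W * P ga n * (i1 * i2))%R.
    { apply Rmult_le_compat_r; auto. apply Rmult_le_compat_l; auto. apply Rmult_le_pos; auto. }
    replace (/ (x1 * x2))%R with (i1 * i2)%R by (unfold i1, i2; rewrite Rinv_mult; ring).
    lra.
Qed.


Lemma nt_eq s z n : newton_term s z n = bb (z + 1) n * Sx s n * RtoC (/ INR (S n)).
Proof.
  unfold newton_term. rewrite ssh_of_Sx, <- NB. ring.
Qed.

Lemma Re_p1 z : Re (z + 1) = (Re z + 1)%R.
Proof. destruct z as [zr zi]. unfold Re, Cplus, RtoC. simpl. reflexivity. Qed.

Theorem proposition3p14 (s : list C) :
  (1 <= length s)%nat ->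
  (forall x, In x s -> x <> 0 /\ (Cmod x <= 1)%R) ->
  (forall z : C, (-1 < Re z)%R ->
     ex_series (fun n => Cmod (newton_term s z n))) /\
  (nth 0 s 0 <> 1 ->
   forall z : C, (-2 < Re z)%R -> ex_series (newton_term s z)).
Proof.
  intros Hlen Hs.
  assert (Hne : s <> []) by (intros E; subst; simpl in Hlen; lia).
  assert (Hm : forall x, In x s -> (Cmod x <= 1)%R) by (intros x Hx; apply Hs; auto).
  split.
  - intros z Hz.
    set (a := Re (z + 1)).
    assert (Ha : (0 < a)%R) by (unfold a; rewrite Re_p1; lra).
    set (be := (Rmin a 1 / 2)%R).
    assert (Hbe : (0 < be < 1 /\ be < a)%R).
    { unfold be. pose proof (Rmin_l a 1). pose proof (Rmin_r a 1).
      assert (0 < Rmin a 1)%R by (apply Rmin_glb_lt; lra). lra. }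
    set (e := (be / 4)%R).
    destruct (bb_bound (z + 1) be ltac:(fold a; lra) ltac:(lra)) as [C2 [HC2 Hbb]].
    destruct (Sx_rec s e Hne Hm ltac:(unfold e; lra)) as [g [C1 [HC1 [_ [_ HSx]]]]].
    set (ga := (be - e - Rabs (be * - e))%R).
    assert (Hga : (0 < ga <= 1)%R).
    { unfold ga, e. rewrite Rabs_left1 by nra. nra. }
    apply (@ex_series_le _ R_CompleteNormedModule) with (b := fun n => (C2 * C1 * (P ga n / INR (S n)))%R).
    2: { apply exR_scal. apply L2. auto. }
    intros n. change (norm (Cmod (newton_term s z n))) with (Rabs (Cmod (newton_term s z n))).
    rewrite Rabs_pos_eq by apply Cmod_ge_0.
    rewrite nt_eq, !Cmod_mult, Cmod_Rinv by (pose proof (INRS_ge1 n); lra).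
    pose proof (Hbb n). pose proof (HSx n). pose proof (P_mul be (- e) n ltac:(lra) ltac:(unfold e; lra)).
    change (P be n * P (- e) n <= P ga n)%R in H1.
    pose proof (P_pos be n ltac:(lra)). pose proof (P_ge1 e n ltac:(unfold e; lra)).
    pose proof (Cmod_ge_0 (bb (z + 1) n)). pose proof (Cmod_ge_0 (Sx s n)).
    pose proof (INRS_ge1 n).
    assert (0 < / INR (S n))%R by (apply Rinv_0_lt_compat; lra).
    unfold Rdiv.
    replace (C2 * C1 * (P ga n * / INR (S n)))%R with (C2 * C1 * P ga n * / INR (S n))%R by ring.
    apply Rmult_le_compat_r. lra.
    apply Rle_trans with ((C2 * P be n) * (C1 * P (- e) n))%R.
    apply Rmult_le_compat; auto.
    replace (C2 * P be n * (C1 * P (- e) n))%R with (C2 * C1 * (P be n * P (- e) n))%R by ring.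
    apply Rmult_le_compat_l. nra. auto.
  - intros Hs1 z Hz.
    set (a := Re (z + 1)).
    assert (Ha : (-1 < a)%R) by (unfold a; rewrite Re_p1; lra).
    set (be := ((-1 + Rmin a 0) / 2)%R).
    assert (Hbe : (-1 < be < 0 /\ be < a)%R).
    { unfold be. pose proof (Rmin_l a 0). pose proof (Rmin_r a 0).
      assert (-1 < Rmin a 0)%R by (apply Rmin_glb_lt; lra). lra. }
    set (e := ((1 + be) / (2 * (1 - be)))%R).
    assert (He : (0 < e)%R) by (unfold e; apply Rdiv_lt_0_compat; lra).
    destruct (bb_bound (z + 1) be ltac:(fold a; lra) ltac:(lra)) as [C2 [HC2 Hbb]].
    destruct (Sx_rec s e Hne Hm He) as [g [C1 [HC1 [Hrec [Hg HSx]]]]].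
    apply ex_series_ext with (a := fun n => bb (z + 1) n * Sx s n * RtoC (/ INR (S n))).
    { intros n. symmetry. apply nt_eq. }
    apply part2 with (s := nth 0 s 0) (w := z + 1) (g := g) (C1 := C1) (C2 := C2) (e := e) (be := be);
      auto; try lra.
    rewrite Rabs_pos_eq by nra.
    assert (e * (1 - be) = (1 + be) / 2)%R by (unfold e; field; lra).
    nra.
Qed.
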